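(* Suppose Assumptions 1, 2 and 4 hold, let $R\ge1$, and run gradient descent with constant step size $\eta_t=1/\beta(R)$, where $\beta(R)=2L^2R^{2L-2}(\beta+G)$. Then there exists a time $t$ with $W(t)\notin B(R)$, i.e. $\max_{1\le k\le L}\|W_k(t)\|_F>R$.
   Context: Setting: data $(x_i,y_i)_{i=1}^n$ with $x_i\in\mathbb{R}^d$, $\|x_i\|\le 1$, $y_i\in\{-1,+1\}$; $z_i:=y_ix_i$; the data are linearly separable. A depth-$L$ linear network is $W=(W_L,\dots,W_1)$ with $W_k\in\mathbb{R}^{d_k\times d_{k-1}}$, $d_0=d$, $d_L=1$, $w_{\mathrm{prod}}:=(W_L\cdots W_1)^\top$, and $\mathcal{R}(W)=\frac1n\sum_{i=1}^n\ell(\langle w_{\mathrm{prod}},z_i\rangle)$. $B(R):=\{W:\max_k\|W_k\|_F\le R\}$. Gradient descent: $W(t+1)=W(t)-\eta_t\nabla\mathcal{R}(W(t))$, $t=0,1,2,\dots$. Assumption 1: $\ell$ is continuously differentiable, $\ell'<0$ everywhere, $\lim_{x\to-\infty}\ell(x)=\infty$, $\lim_{x\to\infty}\ell(x)=0$. Assumption 2: $\nabla\mathcal{R}(W(0))\ne0$ and $\mathcal{R}(W(0))\le\ell(0)$. Assumption 4: $\ell'$ is $\beta$-Lipschitz and $|\ell'|\le G$. *)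

(* Defs.v *)
From Stdlib Require Import Reals Lra.
Open Scope R_scope.

Fixpoint rsum (n : nat) (f : nat -> R) : R :=
  match n with O => 0 | S m => rsum m f + f m end.

(* A network W : k -> i -> j -> entry (i,j) of the matrix W_k,
   meaningful for 1 <= k <= L, i < d k, j < d (k-1). *)
Definition net := nat -> nat -> nat -> R.

Definition frob (d : nat -> nat) (W : net) (k : nat) : R :=
  sqrt (rsum (d k) (fun i => rsum (d (k - 1)%nat) (fun j => (W k i j) ^ 2))).

Fixpoint prodmx (d : nat -> nat) (W : net) (k : nat) : nat -> nat -> R :=
  match k with
  | O => fun i j => if Nat.eqb i j then 1 else 0
  | S m => fun i j => rsum (d m) (fun q => W (S m) i q * prodmx d W m q j)
  end.

(* w_prod = (W_L ... W_1)^T, a vector in R^{d 0} (d L = 1) *)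
Definition wprod (d : nat -> nat) (L : nat) (W : net) : nat -> R :=
  fun j => prodmx d W L 0%nat j.

Definition zdat (x : nat -> nat -> R) (y : nat -> R) : nat -> nat -> R :=
  fun i j => y i * x i j.

Definition risk (loss : R -> R) (n : nat) (d : nat -> nat) (L : nat)
  (x : nat -> nat -> R) (y : nat -> R) (W : net) : R :=
  / INR n * rsum n (fun i =>
     loss (rsum (d 0%nat) (fun j => wprod d L W j * zdat x y i j))).

Definition upd (W : net) (k i j : nat) (s : R) : net :=
  fun k' i' j' =>
    if (Nat.eqb k k' && Nat.eqb i i' && Nat.eqb j j')%bool then s else W k' i' j'.

Definition is_grad (loss : R -> R) (n : nat) (d : nat -> nat) (L : nat)
  (x : nat -> nat -> R) (y : nat -> R) (W g : net) : Prop :=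
  forall k i j, (1 <= k <= L)%nat -> (i < d k)%nat -> (j < d (k - 1))%nat ->
    derivable_pt_lim (fun s => risk loss n d L x y (upd W k i j s)) (W k i j) (g k i j).

(* Main.v *)
Require Import Defs.
From Stdlib Require Import Reals.
From Stdlib Require Import Lra Lia Psatz Classical FunctionalExtensionality ZArith.
Open Scope R_scope.

Lemma rsum_ext n f g : (forall i, (i < n)%nat -> f i = g i) -> rsum n f = rsum n g.
Proof. induction n; intros H; simpl; auto. rewrite IHn; [rewrite H; auto|intros; apply H; lia]. Qed.

Lemma rsum_plus n f g : rsum n (fun i => f i + g i) = rsum n f + rsum n g.
Proof. induction n; simpl; [lra|rewrite IHn; lra]. Qed.

Lemma rsum_minus n f g : rsum n (fun i => f i - g i) = rsum n f - rsum n g.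
Proof. induction n; simpl; [lra|rewrite IHn; lra]. Qed.

Lemma rsum_scal n c f : rsum n (fun i => c * f i) = c * rsum n f.
Proof. induction n; simpl; [lra|rewrite IHn; lra]. Qed.

Lemma rsum_scalr n c f : rsum n (fun i => f i * c) = rsum n f * c.
Proof. induction n; simpl; [lra|rewrite IHn; lra]. Qed.

Lemma rsum_zero n : rsum n (fun _ => 0) = 0.
Proof. induction n; simpl; [lra|rewrite IHn; lra]. Qed.

Lemma rsum_const n c : rsum n (fun _ => c) = INR n * c.
Proof. induction n; simpl rsum; [simpl; lra|rewrite IHn, S_INR; lra]. Qed.

Lemma rsum_le n f g : (forall i, (i < n)%nat -> f i <= g i) -> rsum n f <= rsum n g.
Proof. induction n; intros H; simpl; [lra|]. assert (H1 := H n ltac:(lia)).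
  assert (rsum n f <= rsum n g) by (apply IHn; intros; apply H; lia). lra. Qed.

Lemma rsum_nonneg n f : (forall i, (i < n)%nat -> 0 <= f i) -> 0 <= rsum n f.
Proof. intros H. rewrite <- (rsum_zero n). apply rsum_le. auto. Qed.

Lemma rsum_pos n f : (forall i, (i < n)%nat -> 0 <= f i) ->
  (exists i, (i < n)%nat /\ 0 < f i) -> 0 < rsum n f.
Proof. induction n; intros H [i [Hi Hp]]; [lia|]. simpl.
  destruct (Nat.eq_dec i n) as [->|Hne].
  - assert (0 <= rsum n f) by (apply rsum_nonneg; intros; apply H; lia). lra.
  - assert (0 < rsum n f) by (apply IHn; [intros; apply H; lia| exists i; split; [lia|auto]]).
    assert (0 <= f n) by (apply H; lia). lra. Qed.

Lemma rsum_swap n m F : rsum n (fun i => rsum m (fun j => F i j)) = rsum m (fun j => rsum n (fun i => F i j)).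
Proof. induction n; simpl.
  - rewrite rsum_zero; auto.
  - rewrite IHn. rewrite <- rsum_plus. auto. Qed.

Lemma rsum_delta n i f : rsum n (fun j => (if Nat.eqb i j then 1 else 0) * f j) =
  if Nat.ltb i n then f i else 0.
Proof. induction n; simpl; [auto|]. rewrite IHn.
  destruct (Nat.eqb_spec i n) as [->|Hne].
  - assert (Nat.ltb n n = false) as -> by (apply Nat.ltb_ge; lia).
    assert (Nat.ltb n (S n) = true) as -> by (apply Nat.ltb_lt; lia). lra.
  - destruct (Nat.ltb_spec i n); destruct (Nat.ltb_spec i (S n)); try lia; lra. Qed.

Lemma rsum_delta_lt n i f : (i < n)%nat -> rsum n (fun j => (if Nat.eqb i j then 1 else 0) * f j) = f i.
Proof. intros H. rewrite rsum_delta. destruct (Nat.ltb_spec i n); [auto|lia]. Qed.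

Lemma rsum_sq_zero n b : rsum n (fun i => b i ^ 2) = 0 -> forall i, (i < n)%nat -> b i = 0.
Proof. induction n; intros H i Hi; [lia|]. cbn [rsum] in H.
  assert (0 <= rsum n (fun i => b i ^2)) by (apply rsum_nonneg; intros; apply pow2_ge_0).
  assert (0 <= b n ^ 2) by nra.
  assert (Hb1 : b n ^ 2 = 0) by lra. assert (Hb2 : rsum n (fun i => b i ^ 2) = 0) by lra.
  destruct (Nat.eq_dec i n) as [->|]; [nra|apply IHn; auto; lia]. Qed.

Lemma CS n a b : (rsum n (fun i => a i * b i)) ^ 2 <=
  rsum n (fun i => a i ^ 2) * rsum n (fun i => b i ^ 2).
Proof.
  set (A := rsum n (fun i => a i ^ 2)). set (B := rsum n (fun i => b i ^ 2)).
  set (X := rsum n (fun i => a i * b i)).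
  assert (HB : 0 <= B) by (apply rsum_nonneg; intros; apply pow2_ge_0).
  assert (HA : 0 <= A) by (apply rsum_nonneg; intros; apply pow2_ge_0).
  destruct (Req_dec B 0) as [HB0|HB0].
  - assert (X = 0).
    { unfold X. rewrite <- (rsum_zero n). apply rsum_ext. intros i Hi.
      rewrite (rsum_sq_zero n b HB0 i Hi). ring. }
    rewrite H, HB0. lra.
  - assert (Hq : forall l, 0 <= A - 2 * l * X + l ^ 2 * B).
    { intros l. assert (E : A - 2 * l * X + l ^ 2 * B = rsum n (fun i => (a i - l * b i) ^ 2)).
      { unfold A, X, B. rewrite <- rsum_scal, <- rsum_scal, <- rsum_minus, <- rsum_plus.
        apply rsum_ext; intros; ring. }
      rewrite E. apply rsum_nonneg; intros; apply pow2_ge_0. }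
    specialize (Hq (X / B)).
    assert (0 < B) by lra.
    replace (A - 2 * (X / B) * X + (X / B) ^ 2 * B) with ((A * B - X ^ 2) / B) in Hq by (field; lra).
    assert (0 <= A * B - X ^ 2).
    { apply (Rmult_le_reg_r (/ B)). apply Rinv_0_lt_compat; lra. rewrite Rmult_0_l. exact Hq. }
    lra.
Qed.

Definition nrm (n : nat) (v : nat -> R) : R := sqrt (rsum n (fun i => v i ^ 2)).

Lemma nrm_nonneg n v : 0 <= nrm n v.
Proof. apply sqrt_pos. Qed.

Lemma nrm_sq n v : nrm n v ^ 2 = rsum n (fun i => v i ^ 2).
Proof. unfold nrm. simpl. rewrite Rmult_1_r. apply sqrt_sqrt. apply rsum_nonneg; intros; apply pow2_ge_0. Qed.

Lemma le_sqrt_sq a b : 0 <= b -> a ^ 2 <= b ^ 2 -> a <= b.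
Proof. intros. nra. Qed.

Lemma nrm_le_sq a n v : 0 <= a -> rsum n (fun i => v i ^ 2) <= a ^ 2 -> nrm n v <= a.
Proof. intros. apply le_sqrt_sq; auto. rewrite nrm_sq. auto. Qed.

Lemma dot_le n a b : rsum n (fun i => a i * b i) <= nrm n a * nrm n b.
Proof.
  assert (H := CS n a b). rewrite <- !nrm_sq in H.
  assert (0 <= nrm n a) by apply nrm_nonneg. assert (0 <= nrm n b) by apply nrm_nonneg.
  apply le_sqrt_sq. nra. rewrite Rpow_mult_distr. exact H. Qed.

Lemma dot_abs n a b : Rabs (rsum n (fun i => a i * b i)) <= nrm n a * nrm n b.
Proof. apply Rabs_le. split.
  - assert (H := dot_le n (fun i => - a i) b).
    assert (E1 : rsum n (fun i => - a i * b i) = - rsum n (fun i => a i * b i)).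
    { rewrite <- (Rmult_1_l (rsum n (fun i => a i * b i))), Ropp_mult_distr_l, <- rsum_scal. apply rsum_ext; intros; ring. }
    assert (E2 : nrm n (fun i => - a i) = nrm n a).
    { unfold nrm. f_equal. apply rsum_ext; intros; ring. }
    cbv beta in H. rewrite E1, E2 in H. lra.
  - apply dot_le. Qed.

Lemma nrm_tri n v w : nrm n (fun i => v i + w i) <= nrm n v + nrm n w.
Proof. apply nrm_le_sq. pose proof (nrm_nonneg n v). pose proof (nrm_nonneg n w). lra.
  replace (rsum n (fun i => (v i + w i) ^ 2)) with
    (rsum n (fun i => v i ^ 2) + 2 * rsum n (fun i => v i * w i) + rsum n (fun i => w i ^ 2)).
  2:{ rewrite <- rsum_scal, <- !rsum_plus. apply rsum_ext; intros; ring. }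
  rewrite <- !nrm_sq. pose proof (dot_le n v w). nra. Qed.

Lemma nrm_scal n c v : nrm n (fun i => c * v i) = Rabs c * nrm n v.
Proof. unfold nrm. replace (rsum n (fun i => (c * v i) ^ 2)) with (c ^ 2 * rsum n (fun i => v i ^ 2)).
  rewrite sqrt_mult_alt. rewrite <- sqrt_Rsqr_abs. unfold Rsqr. simpl. rewrite Rmult_1_r. auto. nra.
  rewrite <- rsum_scal. apply rsum_ext; intros; ring. Qed.

Lemma nrm_ext n v w : (forall i, (i < n)%nat -> v i = w i) -> nrm n v = nrm n w.
Proof. intros H. unfold nrm. f_equal. apply rsum_ext. intros. rewrite H; auto. Qed.

Lemma nrm_1 v : nrm 1 v = Rabs (v 0%nat).
Proof. unfold nrm. simpl. rewrite Rplus_0_l, Rmult_1_r. rewrite <- sqrt_Rsqr_abs. auto. Qed.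

Lemma matvec n m (M : nat -> nat -> R) v :
  nrm n (fun i => rsum m (fun j => M i j * v j)) <=
  sqrt (rsum n (fun i => rsum m (fun j => M i j ^ 2))) * nrm m v.
Proof. apply nrm_le_sq.
  apply Rmult_le_pos; [apply sqrt_pos|apply nrm_nonneg].
  rewrite Rpow_mult_distr, nrm_sq. simpl (sqrt _ ^ 2). rewrite Rmult_1_r, sqrt_sqrt.
  2:{ apply rsum_nonneg; intros; apply rsum_nonneg; intros; apply pow2_ge_0. }
  rewrite <- rsum_scalr. apply rsum_le. intros i Hi. apply CS. Qed.


Fixpoint fwd (d : nat -> nat) (V : net) (v : nat -> R) (m : nat) : nat -> R :=
  match m with
  | O => v
  | S m' => fun i => rsum (d m') (fun q => V (S m') i q * fwd d V v m' q)
  end.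

Fixpoint dfw (d : nat -> nat) (V D : net) (v : nat -> R) (m : nat) : nat -> R :=
  match m with
  | O => fun _ => 0
  | S m' => fun i => rsum (d m') (fun q => D (S m') i q * fwd d V v m' q + V (S m') i q * dfw d V D v m' q)
  end.

Fixpoint fws (d : nat -> nat) (V : net) (v : nat -> R) (m : nat) : nat -> R :=
  match m with
  | O => v
  | S m' => fun i => rsum (d (S m')) (fun q => V (S (S m')) i q * fws d V v m' q)
  end.

Lemma prod_fwd d V v m i : (0 < m \/ i < d 0%nat)%nat ->
  rsum (d 0%nat) (fun j => prodmx d V m i j * v j) = fwd d V v m i.
Proof. revert i. induction m; intros i Hi.
  - simpl. apply rsum_delta_lt. lia.
  - simpl. transitivity (rsum (d 0%nat) (fun j => rsum (d m) (fun q => V (S m) i q * (prodmx d V m q j * v j)))).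
    { apply rsum_ext; intros. rewrite <- rsum_scalr. apply rsum_ext; intros; ring. }
    rewrite rsum_swap. apply rsum_ext. intros q Hq. rewrite rsum_scal. rewrite IHm; auto.
    destruct m; lia. Qed.

Lemma frob_S d V m : frob d V (S m) = sqrt (rsum (d (S m)) (fun i => rsum (d m) (fun j => V (S m) i j ^ 2))).
Proof. unfold frob. replace (S m - 1)%nat with m by lia. auto. Qed.

Lemma frob_nonneg d V k : 0 <= frob d V k.
Proof. apply sqrt_pos. Qed.

Lemma frob_sq d V m : frob d V (S m) ^ 2 = rsum (d (S m)) (fun i => rsum (d m) (fun j => V (S m) i j ^ 2)).
Proof. rewrite frob_S. simpl. rewrite Rmult_1_r. apply sqrt_sqrt.
  apply rsum_nonneg; intros; apply rsum_nonneg; intros; apply pow2_ge_0. Qed.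

Lemma matvec_frob d (V : net) m (v : nat -> R) :
  nrm (d (S m)) (fun i => rsum (d m) (fun q => V (S m) i q * v q)) <= frob d V (S m) * nrm (d m) v.
Proof. rewrite frob_S. apply (matvec _ _ (V (S m))). Qed.

Lemma fwd_bound d V v Rd m : 0 <= Rd -> (forall k, (1 <= k <= m)%nat -> frob d V k <= Rd) ->
  nrm (d m) (fwd d V v m) <= Rd ^ m * nrm (d 0%nat) v.
Proof. intros HR. induction m; intros H.
  - simpl. lra.
  - simpl fwd. eapply Rle_trans. apply matvec_frob.
    assert (H1 := H (S m) ltac:(lia)). assert (H2 := IHm ltac:(intros; apply H; lia)).
    pose proof (frob_nonneg d V (S m)). pose proof (nrm_nonneg (d m) (fwd d V v m)).
    pose proof (nrm_nonneg (d 0%nat) v). simpl. 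
    apply Rle_trans with (Rd * (Rd ^ m * nrm (d 0%nat) v)); [|lra].
    apply Rmult_le_compat; auto. Qed.

Definition Sig (d : nat -> nat) (D : net) (m : nat) : R := rsum m (fun k => frob d D (S k)).

Lemma Sig_nonneg d D m : 0 <= Sig d D m.
Proof. apply rsum_nonneg; intros; apply frob_nonneg. Qed.

Definition addn (V D : net) : net := fun k i j => V k i j + D k i j.

Lemma Delta_rec d V D v m i :
  fwd d (addn V D) v (S m) i - fwd d V v (S m) i =
  rsum (d m) (fun q => addn V D (S m) i q * (fwd d (addn V D) v m q - fwd d V v m q)) +
  rsum (d m) (fun q => D (S m) i q * fwd d V v m q).
Proof. simpl. rewrite <- rsum_minus, <- rsum_plus. apply rsum_ext; intros; unfold addn; ring. Qed.

Lemma E_rec d V D v m i :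
  fwd d (addn V D) v (S m) i - fwd d V v (S m) i - dfw d V D v (S m) i =
  rsum (d m) (fun q => V (S m) i q * (fwd d (addn V D) v m q - fwd d V v m q - dfw d V D v m q)) +
  rsum (d m) (fun q => D (S m) i q * (fwd d (addn V D) v m q - fwd d V v m q)).
Proof. simpl. rewrite <- !rsum_minus, <- rsum_plus. apply rsum_ext; intros; unfold addn; ring. Qed.

Lemma Delta_bound d V D v Rd m : 1 <= Rd ->
  (forall k, (1 <= k <= m)%nat -> frob d V k <= Rd) ->
  (forall k, (1 <= k <= m)%nat -> frob d (addn V D) k <= Rd) ->
  Rd * nrm (d m) (fun i => fwd d (addn V D) v m i - fwd d V v m i) <= Rd ^ m * Sig d D m * nrm (d 0%nat) v.
Proof. intros HR. induction m; intros H1 H2.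
  - simpl. unfold Sig. simpl. replace (nrm (d 0%nat) (fun i => v i - v i)) with 0. lra.
    unfold nrm. replace (rsum (d 0%nat) (fun i => (v i - v i) ^ 2)) with 0. symmetry; apply sqrt_0.
    rewrite <- (rsum_zero (d 0%nat)). apply rsum_ext; intros; ring.
  - rewrite (nrm_ext _ _ _ (fun i _ => Delta_rec d V D v m i)).
    assert (IH := IHm ltac:(intros; apply H1; lia) ltac:(intros; apply H2; lia)).
    pose proof (nrm_tri (d (S m)) (fun i => rsum (d m) (fun q => addn V D (S m) i q * (fwd d (addn V D) v m q - fwd d V v m q)))
      (fun i => rsum (d m) (fun q => D (S m) i q * fwd d V v m q))) as T.
    pose proof (matvec_frob d (addn V D) m (fun q => fwd d (addn V D) v m q - fwd d V v m q)) as M1.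
    pose proof (matvec_frob d D m (fwd d V v m)) as M2.
    pose proof (fwd_bound d V v Rd m ltac:(lra) ltac:(intros; apply H1; lia)) as F.
    assert (B1 := H2 (S m) ltac:(lia)).
    pose proof (frob_nonneg d (addn V D) (S m)). pose proof (frob_nonneg d D (S m)).
    pose proof (nrm_nonneg (d m) (fun q => fwd d (addn V D) v m q - fwd d V v m q)).
    pose proof (nrm_nonneg (d m) (fwd d V v m)). pose proof (nrm_nonneg (d 0%nat) v).
    pose proof (Sig_nonneg d D m). pose proof (pow_le Rd m ltac:(lra)).
    unfold Sig. cbn [rsum]. fold (Sig d D m). simpl (Rd ^ S m).
    set (nD := nrm (d m) (fun q => fwd d (addn V D) v m q - fwd d V v m q)) in *.
    set (nF := nrm (d m) (fwd d V v m)) in *.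
    set (fD := frob d D (S m)) in *. set (fV := frob d (addn V D) (S m)) in *.
    set (S0 := Sig d D m) in *. set (nv := nrm (d 0%nat) v) in *. set (P := Rd ^ m) in *.
    assert (fV * nD <= Rd * nD) by (apply Rmult_le_compat_r; lra).
    assert (fD * nF <= fD * (P * nv)) by (apply Rmult_le_compat_l; lra).
    assert (Rd * (Rd * nD) <= Rd * (P * S0 * nv)) by (apply Rmult_le_compat_l; lra).
    nra. Qed.

Lemma E_bound d V D v Rd m : 1 <= Rd ->
  (forall k, (1 <= k <= m)%nat -> frob d V k <= Rd) ->
  (forall k, (1 <= k <= m)%nat -> frob d (addn V D) k <= Rd) ->
  Rd ^ 2 * nrm (d m) (fun i => fwd d (addn V D) v m i - fwd d V v m i - dfw d V D v m i)
   <= Rd ^ m * Sig d D m ^ 2 * nrm (d 0%nat) v.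
Proof. intros HR. induction m; intros H1 H2.
  - simpl. unfold Sig. simpl. replace (nrm (d 0%nat) (fun i => v i - v i - 0)) with 0. lra.
    unfold nrm. replace (rsum (d 0%nat) (fun i => (v i - v i - 0) ^ 2)) with 0. symmetry; apply sqrt_0.
    rewrite (rsum_ext _ _ (fun _ => 0)). symmetry. apply rsum_zero. intros; ring.
  - rewrite (nrm_ext _ _ _ (fun i _ => E_rec d V D v m i)).
    assert (IH := IHm ltac:(intros; apply H1; lia) ltac:(intros; apply H2; lia)).
    pose proof (nrm_tri (d (S m)) (fun i => rsum (d m) (fun q => V (S m) i q * (fwd d (addn V D) v m q - fwd d V v m q - dfw d V D v m q)))
      (fun i => rsum (d m) (fun q => D (S m) i q * (fwd d (addn V D) v m q - fwd d V v m q)))) as T.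
    pose proof (matvec_frob d V m (fun q => fwd d (addn V D) v m q - fwd d V v m q - dfw d V D v m q)) as M1.
    pose proof (matvec_frob d D m (fun q => fwd d (addn V D) v m q - fwd d V v m q)) as M2.
    pose proof (Delta_bound d V D v Rd m HR ltac:(intros; apply H1; lia) ltac:(intros; apply H2; lia)) as F.
    assert (B1 := H1 (S m) ltac:(lia)).
    pose proof (frob_nonneg d V (S m)). pose proof (frob_nonneg d D (S m)).
    pose proof (nrm_nonneg (d m) (fun q => fwd d (addn V D) v m q - fwd d V v m q - dfw d V D v m q)).
    pose proof (nrm_nonneg (d m) (fun q => fwd d (addn V D) v m q - fwd d V v m q)).
    pose proof (nrm_nonneg (d 0%nat) v).
    pose proof (Sig_nonneg d D m). pose proof (pow_le Rd m ltac:(lra)).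
    unfold Sig. cbn [rsum]. fold (Sig d D m). simpl (Rd ^ S m).
    set (nE := nrm (d m) (fun q => fwd d (addn V D) v m q - fwd d V v m q - dfw d V D v m q)) in *.
    set (nD := nrm (d m) (fun q => fwd d (addn V D) v m q - fwd d V v m q)) in *.
    set (fD := frob d D (S m)) in *. set (fV := frob d V (S m)) in *.
    set (S0 := Sig d D m) in *. set (nv := nrm (d 0%nat) v) in *. set (P := Rd ^ m) in *.
    assert (fV * nE <= Rd * nE) by (apply Rmult_le_compat_r; lra).
    assert (Rd * (fD * nD) <= fD * (P * S0 * nv)) by nra.
    assert (Rd^2 * (Rd * nE) <= Rd * (P * S0^2 * nv)) by nra.
    set (T0 := nrm (d (S m)) _) in *.
    assert (Rd^2 * T0 <= Rd^2 * (fV * nE + fD * nD)) by (apply Rmult_le_compat_l; nra).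
    assert (Rd^2 * (fV * nE) <= Rd^2 * (Rd * nE)) by (apply Rmult_le_compat_l; nra).
    assert (Rd^2 * (fD * nD) <= Rd * (fD * (P * S0 * nv))) by nra.
    assert (0 <= Rd * P * nv * fD * S0) by (repeat apply Rmult_le_pos; lra).
    assert (0 <= Rd * P * nv * fD * fD) by (repeat apply Rmult_le_pos; lra).
    replace (Rd * P * (S0 + fD) ^ 2 * nv) with (Rd * (P * S0 ^ 2 * nv) + 2 * (Rd * P * nv * fD * S0) + Rd * P * nv * fD * fD) by ring.
    nra. Qed.

Lemma single_layer d V D v k : (1 <= k)%nat -> (forall k' i j, k' <> k -> D k' i j = 0) ->
  forall m, (forall i, fwd d (addn V D) v m i - fwd d V v m i - dfw d V D v m i = 0) /\
            ((m < k)%nat -> forall i, fwd d (addn V D) v m i - fwd d V v m i = 0).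
Proof. intros Hk HD. induction m as [|m [IH1 IH2]].
  - split; intros; simpl; ring.
  - split.
    + intros i. rewrite E_rec. rewrite (rsum_ext _ _ (fun _ => 0)).
      rewrite (rsum_ext (d m) (fun q => D (S m) i q * _) (fun _ => 0)). rewrite rsum_zero; ring.
      * intros q Hq. destruct (Nat.eq_dec (S m) k) as [E|E].
        -- rewrite IH2 by lia. ring.
        -- rewrite HD by auto. ring.
      * intros q Hq. rewrite IH1. ring.
    + intros Hm i. rewrite Delta_rec. rewrite (rsum_ext _ _ (fun _ => 0)).
      rewrite (rsum_ext (d m) (fun q => D (S m) i q * _) (fun _ => 0)). rewrite rsum_zero; ring.
      * intros q Hq. rewrite HD by lia. ring.
      * intros q Hq. rewrite IH2 by lia. ring.
Qed.

Lemma dfw_add d V D1 D2 v m i :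
  dfw d V (fun k i j => D1 k i j + D2 k i j) v m i = dfw d V D1 v m i + dfw d V D2 v m i.
Proof. revert i; induction m; intros i; simpl; [ring|].
  rewrite <- rsum_plus. apply rsum_ext; intros q _. rewrite IHm. ring. Qed.

Lemma dfw_scal d V c D v m i :
  dfw d V (fun k i j => c * D k i j) v m i = c * dfw d V D v m i.
Proof. revert i; induction m; intros i; simpl; [ring|].
  rewrite <- rsum_scal. apply rsum_ext; intros q _. rewrite IHm. ring. Qed.

Lemma dfw_zero d V v m i : dfw d V (fun _ _ _ => 0) v m i = 0.
Proof. revert i; induction m; intros i; simpl; [ring|].
  rewrite (rsum_ext _ _ (fun _ => 0)). apply rsum_zero. intros q _. rewrite IHm. ring. Qed.

Lemma dfw_rsum d V N (F : nat -> net) v m i :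
  dfw d V (fun k i j => rsum N (fun a => F a k i j)) v m i = rsum N (fun a => dfw d V (F a) v m i).
Proof. induction N; simpl.
  - apply dfw_zero.
  - rewrite <- IHN. apply (dfw_add d V (fun k i j => rsum N (fun a => F a k i j)) (F N)). Qed.

Lemma dfw_ext d V D D' v Lb :
  (forall k i j, (1 <= k <= Lb)%nat -> (i < d k)%nat -> (j < d (k - 1))%nat -> D k i j = D' k i j) ->
  forall m, (m <= Lb)%nat -> forall i, (i < d m)%nat -> dfw d V D v m i = dfw d V D' v m i.
Proof. intros H m. induction m; intros Hm i Hi; simpl; auto.
  apply rsum_ext; intros q Hq. rewrite IHm by (auto; lia). rewrite H; auto. lia.
  replace (S m - 1)%nat with m by lia. auto. Qed.

Definition ebas (k i j : nat) : net := fun k' i' j' =>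
  if (Nat.eqb k k' && Nat.eqb i i' && Nat.eqb j j')%bool then 1 else 0.

Definition tsum (d : nat -> nat) (L : nat) (F : net) : R :=
  rsum L (fun k => rsum (d (S k)) (fun i => rsum (d k) (fun j => F (S k) i j))).

Lemma tsum_ext d L F G : (forall k i j, (1 <= k <= L)%nat -> (i < d k)%nat -> (j < d (k - 1))%nat -> F k i j = G k i j) ->
  tsum d L F = tsum d L G.
Proof. intros H. unfold tsum. apply rsum_ext; intros; apply rsum_ext; intros; apply rsum_ext; intros.
  apply H; try lia. replace (S i - 1)%nat with i by lia. auto. Qed.

Lemma tsum_plus d L F G : tsum d L (fun k i j => F k i j + G k i j) = tsum d L F + tsum d L G.
Proof. unfold tsum. rewrite <- rsum_plus. apply rsum_ext; intros. rewrite <- rsum_plus.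
  apply rsum_ext; intros. apply rsum_plus. Qed.

Lemma tsum_scal d L c F : tsum d L (fun k i j => c * F k i j) = c * tsum d L F.
Proof. unfold tsum. rewrite <- rsum_scal. apply rsum_ext; intros. rewrite <- rsum_scal.
  apply rsum_ext; intros. apply rsum_scal. Qed.

Lemma tsum_rsum d L N (F : nat -> net) :
  tsum d L (fun k i j => rsum N (fun a => F a k i j)) = rsum N (fun a => tsum d L (F a)).
Proof. unfold tsum. symmetry. rewrite rsum_swap. apply rsum_ext; intros. rewrite rsum_swap.
  apply rsum_ext; intros. apply rsum_swap. Qed.

Lemma tsum_nonneg d L F : (forall k i j, 0 <= F k i j) -> 0 <= tsum d L F.
Proof. intros H. unfold tsum. repeat (apply rsum_nonneg; intros). auto. Qed.

Lemma rsum_single n F j : (j < n)%nat -> (forall j', (j' < n)%nat -> j' <> j -> F j' = 0) -> rsum n F = F j.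
Proof. induction n; intros Hj H; [lia|]. simpl.
  destruct (Nat.eq_dec j n) as [->|Hne].
  - rewrite (rsum_ext _ _ (fun _ => 0)). rewrite rsum_zero. ring. intros; apply H; lia.
  - rewrite IHn by (auto; lia). rewrite (H n) by lia. ring. Qed.

Lemma ebas_eq k i j k' i' j' : ebas k i j k' i' j' = if (Nat.eqb k k' && Nat.eqb i i' && Nat.eqb j j')%bool then 1 else 0.
Proof. reflexivity. Qed.

Lemma tsum_decomp d L D k i j : (1 <= k <= L)%nat -> (i < d k)%nat -> (j < d (k - 1))%nat ->
  tsum d L (fun k0 i0 j0 => D k0 i0 j0 * ebas k0 i0 j0 k i j) = D k i j.
Proof. intros Hk Hi Hj. unfold tsum.
  destruct k as [|k']; [lia|]. replace (S k' - 1)%nat with k' in Hj by lia.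
  rewrite (rsum_single L _ k'); [|lia|].
  2:{ intros k2 Hk2 Hne.
      rewrite (rsum_ext _ _ (fun _ => 0)); [apply rsum_zero|]. intros.
      rewrite (rsum_ext _ _ (fun _ => 0)); [apply rsum_zero|]. intros.
      rewrite ebas_eq. replace (Nat.eqb (S k2) (S k')) with false by (symmetry; apply Nat.eqb_neq; lia). simpl; ring. }
  rewrite (rsum_single _ _ i); [|lia|].
  2:{ intros i2 Hi2 Hne.
      rewrite (rsum_ext _ _ (fun _ => 0)); [apply rsum_zero|]. intros.
      rewrite ebas_eq. replace (Nat.eqb i2 i) with false by (symmetry; apply Nat.eqb_neq; lia).
      rewrite Bool.andb_false_r; simpl; ring. }
  rewrite (rsum_single _ _ j); [|lia|].
  2:{ intros j2 Hj2 Hne.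
      rewrite ebas_eq. replace (Nat.eqb j2 j) with false by (symmetry; apply Nat.eqb_neq; lia).
      rewrite Bool.andb_false_r; simpl; ring. }
  rewrite ebas_eq, !Nat.eqb_refl. simpl. ring. Qed.

Lemma dfw_lin d V D v L : (d L = 1)%nat ->
  dfw d V D v L 0%nat = tsum d L (fun k i j => D k i j * dfw d V (ebas k i j) v L 0%nat).
Proof. intros HdL.
  rewrite (dfw_ext d V D (fun k' i' j' => tsum d L (fun k i j => D k i j * ebas k i j k' i' j')) v L)
    with (m := L); try lia.
  2:{ intros. symmetry. apply tsum_decomp; auto. }
  unfold tsum at 1. rewrite dfw_rsum. unfold tsum. apply rsum_ext; intros k _.
  rewrite dfw_rsum. apply rsum_ext; intros i _.
  rewrite dfw_rsum. apply rsum_ext; intros j _.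
  apply dfw_scal. Qed.


Lemma risk_eq loss n d L x y V : (1 <= L)%nat ->
  risk loss n d L x y V = / INR n * rsum n (fun a => loss (fwd d V (zdat x y a) L 0%nat)).
Proof. intros HL. unfold risk. f_equal. apply rsum_ext; intros a _. f_equal.
  unfold wprod. apply prod_fwd. lia. Qed.

Lemma upd_eq V k i j s : upd V k i j s = addn V (fun k' i' j' => (s - V k i j) * ebas k i j k' i' j').
Proof. apply functional_extensionality; intros k'. apply functional_extensionality; intros i'.
  apply functional_extensionality; intros j'. unfold upd, addn. rewrite ebas_eq.
  destruct (Nat.eqb_spec k k'); destruct (Nat.eqb_spec i i'); destruct (Nat.eqb_spec j j'); simpl; subst; ring. Qed.

Lemma fwd_upd d V k i j s z L : (1 <= k)%nat ->
  fwd d (upd V k i j s) z L 0%nat = fwd d V z L 0%nat + (s - V k i j) * dfw d V (ebas k i j) z L 0%nat.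
Proof. intros Hk. rewrite upd_eq.
  destruct (single_layer d V (fun k' i' j' => (s - V k i j) * ebas k i j k' i' j') z k Hk) with (m := L) as [H _].
  { intros k' i' j' Hne. rewrite ebas_eq. replace (Nat.eqb k k') with false by (symmetry; apply Nat.eqb_neq; lia). simpl. ring. }
  specialize (H 0%nat). rewrite dfw_scal in H. lra. Qed.

Lemma deriv_rsum N (F : nat -> R -> R) F' x :
  (forall a, (a < N)%nat -> derivable_pt_lim (F a) x (F' a)) ->
  derivable_pt_lim (fun s => rsum N (fun a => F a s)) x (rsum N F').
Proof. induction N; intros H; simpl.
  - apply derivable_pt_lim_const.
  - apply (derivable_pt_lim_plus (fun s => rsum N (fun a => F a s)) (F N)).
    apply IHN; intros; apply H; lia. apply H; lia. Qed.

Lemma deriv_aff loss dloss p c s0 : (forall t, derivable_pt_lim loss t (dloss t)) ->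
  derivable_pt_lim (fun s => loss (p + (s - s0) * c)) s0 (dloss p * c).
Proof. intros Hd.
  assert (H1 : derivable_pt_lim (fun s => p + (s - s0) * c) s0 c).
  { apply (derivable_pt_lim_ext (fct_cte (p - s0 * c) + (mult_real_fct c id))%F).
    intros; unfold fct_cte, mult_real_fct, id, plus_fct; ring.
    assert (H := derivable_pt_lim_plus _ _ s0 _ _ (derivable_pt_lim_const (p - s0*c) s0) (derivable_pt_lim_scal id c s0 1 (derivable_pt_lim_id s0))).
    replace (0 + c*1) with c in H by ring. exact H. }
  assert (H2 := derivable_pt_lim_comp _ loss s0 c (dloss p) H1).
  cbv beta in H2. replace (p + (s0 - s0) * c) with p in H2 by ring.
  specialize (H2 (Hd p)). unfold comp in H2. exact H2. Qed.

Lemma grad_formula loss dloss n d L x y V g :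
  (forall t, derivable_pt_lim loss t (dloss t)) -> (1 <= L)%nat ->
  is_grad loss n d L x y V g ->
  forall k i j, (1 <= k <= L)%nat -> (i < d k)%nat -> (j < d (k - 1))%nat ->
  g k i j = / INR n * rsum n (fun a => dloss (fwd d V (zdat x y a) L 0%nat) * dfw d V (ebas k i j) (zdat x y a) L 0%nat).
Proof. intros Hd HL Hg k i j Hk Hi Hj.
  specialize (Hg k i j Hk Hi Hj).
  apply (uniqueness_limite (fun s => risk loss n d L x y (upd V k i j s)) (V k i j)); auto.
  apply (derivable_pt_lim_ext (fun s => / INR n * rsum n (fun a => loss (fwd d V (zdat x y a) L 0%nat + (s - V k i j) * dfw d V (ebas k i j) (zdat x y a) L 0%nat)))).
  { intros s. rewrite risk_eq by auto. f_equal. apply rsum_ext; intros. rewrite fwd_upd by lia. auto. }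
  apply (derivable_pt_lim_scal (fun s => rsum n (fun a => loss (fwd d V (zdat x y a) L 0%nat + (s - V k i j) * dfw d V (ebas k i j) (zdat x y a) L 0%nat)))).
  apply (deriv_rsum n (fun a s => loss (fwd d V (zdat x y a) L 0%nat + (s - V k i j) * dfw d V (ebas k i j) (zdat x y a) L 0%nat))).
  intros a _. apply deriv_aff; auto. Qed.

Lemma tsum_gD loss dloss n d L x y V g D :
  (forall t, derivable_pt_lim loss t (dloss t)) -> (1 <= L)%nat -> d L = 1%nat ->
  is_grad loss n d L x y V g ->
  tsum d L (fun k i j => g k i j * D k i j) =
  / INR n * rsum n (fun a => dloss (fwd d V (zdat x y a) L 0%nat) * dfw d V D (zdat x y a) L 0%nat).
Proof. intros Hd HL HdL Hg.
  rewrite (tsum_ext d L _ (fun k i j => / INR n * rsum n (fun a => dloss (fwd d V (zdat x y a) L 0%nat) * (D k i j * dfw d V (ebas k i j) (zdat x y a) L 0%nat)))).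
  2:{ intros k i j Hk Hi Hj. rewrite (grad_formula loss dloss n d L x y V g Hd HL Hg k i j Hk Hi Hj).
      rewrite Rmult_assoc. f_equal. rewrite <- rsum_scalr. apply rsum_ext; intros; ring. }
  rewrite tsum_scal. f_equal. rewrite tsum_rsum. apply rsum_ext; intros a _.
  rewrite tsum_scal. f_equal. symmetry. apply dfw_lin; auto. Qed.


Lemma Rabs_le_between x b : Rabs x <= b -> - b <= x <= b.
Proof. unfold Rabs. destruct (Rcase_abs x); intros; lra. Qed.

Lemma loss_step loss dloss beta a b :
  (forall t, derivable_pt_lim loss t (dloss t)) ->
  (forall s t, Rabs (dloss s - dloss t) <= beta * Rabs (s - t)) ->
  loss b - loss a <= dloss a * (b - a) + beta * (b - a) ^ 2.
Proof. intros Hd Hl.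
  assert (Hb : 0 <= beta).
  { specialize (Hl 1 0). pose proof (Rabs_pos (dloss 1 - dloss 0)).
    replace (1 - 0) with 1 in Hl by ring. rewrite Rabs_R1 in Hl. lra. }
  destruct (Rtotal_order a b) as [H|[H|H]].
  - destruct (MVT_cor2 loss dloss a b H (fun c _ => Hd c)) as [c [E Hc]].
    rewrite E. specialize (Hl c a). rewrite (Rabs_right (c - a)) in Hl by lra.
    apply Rabs_le_between in Hl.
    assert (dloss c <= dloss a + beta * (b - a)) by nra.
    assert (dloss c * (b - a) <= (dloss a + beta * (b - a)) * (b - a)) by (apply Rmult_le_compat_r; lra). nra.
  - subst. replace (b - b) with 0 by ring. nra.
  - destruct (MVT_cor2 loss dloss b a H (fun c _ => Hd c)) as [c [E Hc]].
    replace (loss b - loss a) with (- (loss a - loss b)) by ring.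
    rewrite E. specialize (Hl c a). rewrite (Rabs_left (c - a)) in Hl by lra.
    apply Rabs_le_between in Hl.
    assert (dloss a - beta * (a - b) <= dloss c) by nra.
    assert ((dloss a - beta * (a - b)) * (a - b) <= dloss c * (a - b)) by (apply Rmult_le_compat_r; lra). nra. Qed.

Lemma Sig_sq d D L : Sig d D L ^ 2 <= INR L * tsum d L (fun k i j => D k i j ^ 2).
Proof. unfold Sig. rewrite (rsum_ext L _ (fun k => frob d D (S k) * 1)) by (intros; ring).
  eapply Rle_trans. apply (CS L (fun k => frob d D (S k)) (fun _ => 1)). cbv beta.
  rewrite (rsum_ext L (fun _ => 1 ^ 2) (fun _ => 1)) by (intros; ring).
  rewrite rsum_const. rewrite Rmult_1_r, Rmult_comm. apply Rmult_le_compat_l. apply pos_INR.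
  unfold tsum. right. apply rsum_ext. intros k _. apply frob_sq. Qed.

Lemma descent loss dloss n d L x y V V' g beta G Rd eta :
  (forall t, derivable_pt_lim loss t (dloss t)) ->
  (forall s t, Rabs (dloss s - dloss t) <= beta * Rabs (s - t)) ->
  (forall t, Rabs (dloss t) <= G) -> 0 <= beta ->
  (1 <= L)%nat -> d L = 1%nat -> (0 < n)%nat ->
  (forall a, (a < n)%nat -> nrm (d 0%nat) (zdat x y a) <= 1) ->
  1 <= Rd -> is_grad loss n d L x y V g ->
  (forall k i j, V' k i j = V k i j - eta * g k i j) -> 0 < eta ->
  eta * (G + beta) * (Rd ^ (L - 1)) ^ 2 * INR L <= 1 / 2 ->
  (forall k, (1 <= k <= L)%nat -> frob d V k <= Rd) ->
  (forall k, (1 <= k <= L)%nat -> frob d V' k <= Rd) ->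
  risk loss n d L x y V' <= risk loss n d L x y V - eta / 2 * tsum d L (fun k i j => g k i j ^ 2).
Proof. intros Hd Hl Hbd Hb HL HdL Hn Hz HR Hg HV' Heta Hsmall B1 B2.
  set (D := fun k i j => - eta * g k i j).
  assert (EV : V' = addn V D).
  { apply functional_extensionality; intros k. apply functional_extensionality; intros i.
    apply functional_extensionality; intros j. unfold addn, D. rewrite HV'. ring. }
  subst V'.
  assert (HG : 0 <= G) by (specialize (Hbd 0); pose proof (Rabs_pos (dloss 0)); lra).
  set (Sg := tsum d L (fun k i j => g k i j ^ 2)).
  assert (HSg : 0 <= Sg) by (apply tsum_nonneg; intros; apply pow2_ge_0).
  set (P := Rd ^ (L - 1)).
  assert (HP : 1 <= P) by (apply pow_R1_Rle; lra).
  assert (HRL : Rd ^ L = Rd * P) by (unfold P; replace L with (S (L - 1)) at 1 by lia; reflexivity).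
  set (S0 := Sig d D L).
  assert (HS0 : 0 <= S0) by apply Sig_nonneg.
  assert (HS2 : S0 ^ 2 <= INR L * (eta ^ 2 * Sg)).
  { eapply Rle_trans. apply Sig_sq. right. f_equal. unfold Sg. rewrite <- tsum_scal.
    apply tsum_ext; intros. unfold D. ring. }
  set (K0 := (G + beta) * P ^ 2 * INR L * (eta ^ 2 * Sg)).
  assert (Hper : forall a, (a < n)%nat ->
     loss (fwd d (addn V D) (zdat x y a) L 0%nat) <=
     loss (fwd d V (zdat x y a) L 0%nat) +
     dloss (fwd d V (zdat x y a) L 0%nat) * dfw d V D (zdat x y a) L 0%nat + K0).
  { intros a Ha.
    set (z := zdat x y a).
    set (p := fwd d V z L 0%nat). set (p' := fwd d (addn V D) z L 0%nat).
    set (dp := dfw d V D z L 0%nat).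
    pose proof (loss_step loss dloss beta p p' Hd Hl) as LS.
    pose proof (Delta_bound d V D z Rd L HR B1 B2) as DB.
    pose proof (E_bound d V D z Rd L HR B1 B2) as EB.
    rewrite HdL, nrm_1 in DB, EB. fold S0 in DB, EB. fold p p' dp in DB, EB.
    pose proof (Hz a Ha) as Hza. fold z in Hza.
    pose proof (nrm_nonneg (d 0%nat) z).
    assert (HDel : Rd * Rabs (p' - p) <= Rd * (P * S0)).
    { rewrite HRL in DB. eapply Rle_trans. exact DB.
      assert (0 <= Rd * P * S0) by (repeat apply Rmult_le_pos; lra). nra. }
    assert (HDel2 : Rabs (p' - p) <= P * S0).
    { apply Rmult_le_reg_l with Rd; lra. }
    assert (HE : Rd * Rd * Rabs (p' - p - dp) <= Rd * (P * S0 ^ 2)).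
    { replace (Rd * Rd) with (Rd ^ 2) by ring. rewrite HRL in EB. eapply Rle_trans. exact EB.
      assert (0 <= Rd * P * S0 ^ 2) by (repeat apply Rmult_le_pos; try lra; apply pow2_ge_0). nra. }
    assert (HE2 : Rd * Rabs (p' - p - dp) <= P * S0 ^ 2).
    { apply Rmult_le_reg_l with Rd; lra. }
    assert (HE3 : Rabs (p' - p - dp) <= P ^ 2 * S0 ^ 2).
    { pose proof (Rabs_pos (p' - p - dp)). pose proof (pow2_ge_0 S0).
      assert (Rabs (p' - p - dp) <= Rd * Rabs (p' - p - dp)) by nra.
      assert (P * S0 ^ 2 <= P ^ 2 * S0 ^ 2) by nra. lra. }
    assert (HD3 : (p' - p) ^ 2 <= P ^ 2 * S0 ^ 2).
    { pose proof (Rabs_pos (p' - p)). rewrite <- (pow2_abs (p' - p)).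
      replace (P ^ 2 * S0 ^ 2) with ((P * S0) ^ 2) by ring. apply pow_incr. lra. }
    assert (HT : dloss p * (p' - p) <= dloss p * dp + G * Rabs (p' - p - dp)).
    { replace (dloss p * (p' - p)) with (dloss p * dp + dloss p * (p' - p - dp)) by ring.
      pose proof (Rle_abs (dloss p * (p' - p - dp))). rewrite Rabs_mult in H0.
      pose proof (Hbd p). pose proof (Rabs_pos (p' - p - dp)).
      assert (Rabs (dloss p) * Rabs (p' - p - dp) <= G * Rabs (p' - p - dp)) by (apply Rmult_le_compat_r; lra).
      lra. }
    assert (G * Rabs (p' - p - dp) + beta * (p' - p) ^ 2 <= (G + beta) * (P ^ 2 * S0 ^ 2)).
    { assert (G * Rabs (p' - p - dp) <= G * (P^2 * S0^2)) by (apply Rmult_le_compat_l; lra).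
      assert (beta * (p' - p)^2 <= beta * (P^2 * S0^2)) by (apply Rmult_le_compat_l; lra). lra. }
    assert ((G + beta) * (P ^ 2 * S0 ^ 2) <= K0).
    { unfold K0. replace ((G + beta) * P ^ 2 * INR L * (eta ^ 2 * Sg)) with ((G + beta) * (P ^ 2 * (INR L * (eta ^ 2 * Sg)))) by ring.
      apply Rmult_le_compat_l. lra. apply Rmult_le_compat_l. nra. auto. }
    lra. }
  rewrite !risk_eq by auto.
  assert (Hsum : rsum n (fun a => loss (fwd d (addn V D) (zdat x y a) L 0%nat)) <=
     rsum n (fun a => loss (fwd d V (zdat x y a) L 0%nat)) +
     rsum n (fun a => dloss (fwd d V (zdat x y a) L 0%nat) * dfw d V D (zdat x y a) L 0%nat) + INR n * K0).
  { rewrite <- rsum_const, <- !rsum_plus. apply rsum_le. auto. }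
  assert (Hgd := tsum_gD loss dloss n d L x y V g D Hd HL HdL Hg).
  assert (HgD : tsum d L (fun k i j => g k i j * D k i j) = - eta * Sg).
  { unfold Sg. rewrite <- tsum_scal. apply tsum_ext; intros. unfold D. ring. }
  assert (Hn' : 0 < INR n) by (apply lt_0_INR; lia).
  assert (HK : K0 <= eta / 2 * Sg).
  { unfold K0. replace ((G + beta) * P ^ 2 * INR L * (eta ^ 2 * Sg)) with ((eta * (G + beta) * P ^ 2 * INR L) * (eta * Sg)) by ring.
    replace (eta / 2 * Sg) with (1/2 * (eta * Sg)) by field. apply Rmult_le_compat_r. nra. fold P in Hsmall. lra. }
  apply Rmult_le_compat_l with (r := / INR n) in Hsum; [|left; apply Rinv_0_lt_compat; lra].
  rewrite !Rmult_plus_distr_l in Hsum. rewrite <- Hgd, HgD in Hsum.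
  replace (/ INR n * (INR n * K0)) with K0 in Hsum by (field; lra). lra. Qed.


Lemma fwd_fws d V v m i : fwd d V v (S m) i = fws d V (fwd d V v 1) m i.
Proof. revert i. induction m; intros i; [reflexivity|].
  change (fwd d V v (S (S m)) i) with (rsum (d (S m)) (fun q => V (S (S m)) i q * fwd d V v (S m) q)).
  simpl fws. apply rsum_ext; intros. rewrite IHm. auto. Qed.

Lemma dfw_fws d V D v : (forall k i j, (2 <= k)%nat -> D k i j = 0) ->
  forall m i, dfw d V D v (S m) i = fws d V (dfw d V D v 1) m i.
Proof. intros HD m. induction m; intros i; [reflexivity|].
  change (dfw d V D v (S (S m)) i) with (rsum (d (S m)) (fun q => D (S (S m)) i q * fwd d V v (S m) q + V (S (S m)) i q * dfw d V D v (S m) q)).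
  change (fws d V (dfw d V D v 1) (S m) i) with (rsum (d (S m)) (fun q => V (S (S m)) i q * fws d V (dfw d V D v 1) m q)).
  apply rsum_ext; intros. rewrite IHm, HD by lia. ring. Qed.

Definition ebv (j : nat) : nat -> R := fun i => if Nat.eqb j i then 1 else 0.

Lemma fws_lin d V v m i : (0 < m \/ i < d 1%nat)%nat ->
  fws d V v m i = rsum (d 1%nat) (fun j => v j * fws d V (ebv j) m i).
Proof. revert i. induction m; intros i Hi.
  - simpl. rewrite (rsum_single _ _ i); [| lia |].
    + unfold ebv. rewrite Nat.eqb_refl. ring.
    + intros j Hj Hne. unfold ebv. replace (Nat.eqb j i) with false by (symmetry; apply Nat.eqb_neq; auto). ring.
  - simpl. transitivity (rsum (d (S m)) (fun q => rsum (d 1%nat) (fun j => V (S (S m)) i q * (v j * fws d V (ebv j) m q)))).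
    + apply rsum_ext; intros q Hq. rewrite IHm by (destruct m; lia). rewrite <- rsum_scal. auto.
    + rewrite rsum_swap. apply rsum_ext; intros j _. rewrite <- rsum_scal. apply rsum_ext; intros; ring. Qed.

Lemma fws_scal d V c v m i : fws d V (fun i => c * v i) m i = c * fws d V v m i.
Proof. revert i. induction m; intros i; simpl; [auto|].
  rewrite <- rsum_scal. apply rsum_ext; intros. rewrite IHm. ring. Qed.

Lemma rsum_le_first n f : (0 < n)%nat -> (forall a, (a < n)%nat -> f a <= 0) -> rsum n f <= f 0%nat.
Proof. induction n; intros Hn H; [lia|]. simpl. destruct n.
  - simpl. lra.
  - assert (rsum (S n) f <= f 0%nat) by (apply IHn; [lia|intros; apply H; lia]).
    assert (f (S n) <= 0) by (apply H; lia). lra. Qed.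

Lemma grad_lower loss dloss n d L x y V g Rd (u : nat -> R) delta M :
  (forall t, derivable_pt_lim loss t (dloss t)) ->
  (1 <= L)%nat -> d L = 1%nat -> (0 < n)%nat ->
  (forall a, (a < n)%nat -> nrm (d 0%nat) (zdat x y a) <= 1) ->
  1 <= Rd -> is_grad loss n d L x y V g ->
  (forall k, (1 <= k <= L)%nat -> frob d V k <= Rd) ->
  (forall a, (a < n)%nat -> 0 < rsum (d 0%nat) (fun j => u j * zdat x y a j)) ->
  0 < delta -> (exists a, (a < n)%nat /\ delta <= fwd d V (zdat x y a) L 0%nat) ->
  M < 0 -> (forall t, Rabs t <= Rd ^ L -> dloss t <= M) ->
  (delta / Rd) ^ 2 * (M * rsum (d 0%nat) (fun j => u j * zdat x y 0%nat j) / INR n) ^ 2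
    / rsum (d 0%nat) (fun j => u j ^ 2)
  <= tsum d L (fun k i j => g k i j ^ 2).
Proof. intros Hd HL HdL Hn Hz HR Hg B Hu Hdel [a0 [Ha0 Hpa0]] HM HMb.
  set (r := fun j => fws d V (ebv j) (L - 1) 0%nat).
  set (c := fun a => rsum (d 0%nat) (fun j => u j * zdat x y a j)).
  set (p := fun a => fwd d V (zdat x y a) L 0%nat).
  assert (EL : L = S (L - 1)) by lia.
  assert (Hd1 : (0 < L - 1 \/ 0 < d 1%nat)%nat).
  { destruct (Nat.eq_dec L 1) as [E|E]; [right; rewrite <- E, HdL; lia| left; lia]. }
  assert (Hp : forall a, p a = rsum (d 1%nat) (fun j => fwd d V (zdat x y a) 1 j * r j)).
  { intros a. unfold p. rewrite EL at 1. rewrite fwd_fws. apply fws_lin. auto. }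
  set (N2 := rsum (d 1%nat) (fun j => r j ^ 2)).
  assert (HN2 : (delta / Rd) ^ 2 <= N2).
  { assert (Hdot := dot_le (d 1%nat) (fwd d V (zdat x y a0) 1) r). rewrite <- Hp in Hdot.
    assert (Hf := fwd_bound d V (zdat x y a0) Rd 1 ltac:(lra) ltac:(intros; apply B; lia)).
    pose proof (Hz a0 Ha0). pose proof (nrm_nonneg (d 1%nat) r).
    pose proof (nrm_nonneg (d 1%nat) (fwd d V (zdat x y a0) 1)).
    assert (delta <= Rd * nrm (d 1%nat) r).
    { rewrite pow_1 in Hf. fold p in Hpa0. 
      assert (nrm (d 1%nat) (fwd d V (zdat x y a0) 1) * nrm (d 1%nat) r <= Rd * nrm (d 1%nat) r).
      { apply Rmult_le_compat_r; auto. pose proof (nrm_nonneg (d 0%nat) (zdat x y a0)). nra. }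
      change (p a0) with (fwd d V (zdat x y a0) L 0%nat) in Hdot. lra. }
    unfold N2. rewrite <- nrm_sq. apply pow_incr. split. apply Rlt_le, Rdiv_lt_0_compat; lra.
    apply (Rmult_le_reg_l Rd). lra. replace (Rd * (delta / Rd)) with delta by (field; lra). lra. }
  set (Du := fun k i j => if Nat.eqb k 1 then r i * u j else 0).
  assert (HDu1 : forall a i, dfw d V Du (zdat x y a) 1 i = c a * r i).
  { intros a i. simpl. unfold c. rewrite <- rsum_scalr. apply rsum_ext; intros. unfold Du. simpl. ring. }
  assert (HDuL : forall a, dfw d V Du (zdat x y a) L 0%nat = c a * N2).
  { intros a. rewrite EL at 1. rewrite dfw_fws.
    2:{ intros k i j Hk. unfold Du. replace (Nat.eqb k 1) with false by (symmetry; apply Nat.eqb_neq; lia). auto. }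
    replace (dfw d V Du (zdat x y a) 1) with (fun i => c a * r i) by (apply functional_extensionality; intros; rewrite HDu1; auto).
    rewrite fws_scal. f_equal. rewrite fws_lin by auto. unfold N2. apply rsum_ext; intros. unfold r. ring. }
  set (U2 := rsum (d 0%nat) (fun j => u j ^ 2)).
  assert (HY : tsum d L (fun k i j => Du k i j ^ 2) = N2 * U2).
  { unfold tsum. rewrite (rsum_single L _ 0%nat); [|lia|].
    - unfold N2, U2. rewrite <- rsum_scalr. apply rsum_ext; intros. rewrite <- rsum_scal. apply rsum_ext; intros.
      unfold Du. simpl. ring.
    - intros k Hk Hne. rewrite (rsum_ext _ _ (fun _ => 0)). apply rsum_zero. intros.
      rewrite (rsum_ext _ _ (fun _ => 0)). apply rsum_zero. intros. unfold Du.
      replace (Nat.eqb (S k) 1) with false by (symmetry; apply Nat.eqb_neq; lia). ring. }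
  set (Gam := / INR n * rsum n (fun a => dloss (p a) * c a)).
  assert (HX : tsum d L (fun k i j => g k i j * Du k i j) = N2 * Gam).
  { rewrite (tsum_gD loss dloss n d L x y V g Du Hd HL HdL Hg). unfold Gam. rewrite <- Rmult_assoc, (Rmult_comm N2), Rmult_assoc.
    f_equal. rewrite <- rsum_scal. apply rsum_ext; intros. rewrite HDuL. unfold p. ring. }
  assert (Hpb : forall a, (a < n)%nat -> Rabs (p a) <= Rd ^ L).
  { intros a Ha. unfold p. rewrite <- nrm_1. rewrite <- HdL.
    eapply Rle_trans. apply (fwd_bound d V (zdat x y a) Rd L ltac:(lra) B).
    pose proof (Hz a Ha). pose proof (pow_le Rd L ltac:(lra)).
    rewrite <- (Rmult_1_r (Rd ^ L)) at 2. apply Rmult_le_compat_l; auto. }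
  assert (Hn' : 0 < INR n) by (apply lt_0_INR; lia).
  assert (HGam : Gam <= M * c 0%nat / INR n).
  { unfold Gam. unfold Rdiv. rewrite Rmult_comm. apply Rmult_le_compat_r. left; apply Rinv_0_lt_compat; lra.
    eapply Rle_trans. apply rsum_le_first. auto.
    - intros a Ha. pose proof (Hu a Ha). pose proof (HMb _ (Hpb a Ha)). fold (c a) in H. nra.
    - pose proof (Hu 0%nat Hn). pose proof (HMb _ (Hpb 0%nat Hn)). fold (c 0%nat) in H. nra. }
  assert (Hc0 : 0 < c 0%nat) by (apply Hu; auto).
  assert (HMc : M * c 0%nat / INR n < 0).
  { unfold Rdiv. assert (M * c 0%nat < 0) by nra. assert (0 < / INR n) by (apply Rinv_0_lt_compat; lra). nra. }
  assert (HG2 : (M * c 0%nat / INR n) ^ 2 <= Gam ^ 2) by nra.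
  assert (HU2 : 0 < U2).
  { pose proof (dot_le (d 0%nat) u (zdat x y 0%nat)). fold (c 0%nat) in H.
    unfold U2. rewrite <- nrm_sq. pose proof (nrm_nonneg (d 0%nat) u). pose proof (nrm_nonneg (d 0%nat) (zdat x y 0%nat)).
    assert (0 < nrm (d 0%nat) u).
    { destruct H0 as [H0|H0]; auto. rewrite <- H0 in H. lra. }
    nra. }
  assert (HN2p : 0 < N2).
  { eapply Rlt_le_trans; [|exact HN2]. apply pow_lt. apply Rdiv_lt_0_compat; lra. }
  set (Sg := tsum d L (fun k i j => g k i j ^ 2)).
  set (lam := Gam / U2).
  assert (Hq : 0 <= Sg - 2 * lam * (N2 * Gam) + lam ^ 2 * (N2 * U2)).
  { rewrite <- HX, <- HY. unfold Sg.
    assert (E : tsum d L (fun k i j => (g k i j - lam * Du k i j) ^ 2) =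
       tsum d L (fun k i j => g k i j ^ 2) - 2 * lam * tsum d L (fun k i j => g k i j * Du k i j) +
       lam ^ 2 * tsum d L (fun k i j => Du k i j ^ 2)).
    { rewrite (tsum_ext d L (fun k i j => (g k i j - lam * Du k i j) ^ 2)
        (fun k i j => (g k i j ^ 2 + (- (2 * lam)) * (g k i j * Du k i j)) + lam ^ 2 * (Du k i j ^ 2))) by (intros; ring).
      rewrite !tsum_plus.
      rewrite (tsum_scal d L (- (2 * lam)) (fun k i j => g k i j * Du k i j)).
      rewrite (tsum_scal d L (lam ^ 2) (fun k i j => Du k i j ^ 2)). ring. }
    rewrite <- E. apply tsum_nonneg; intros; apply pow2_ge_0. }
  unfold lam in Hq.
  assert (Hfin : N2 * Gam ^ 2 / U2 <= Sg).
  { replace (Sg - 2 * (Gam / U2) * (N2 * Gam) + (Gam / U2) ^ 2 * (N2 * U2)) with (Sg - N2 * Gam ^ 2 / U2) in Hq by (field; lra). lra. }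
  change (rsum (d 0%nat) (fun j => u j * zdat x y 0%nat j)) with (c 0%nat).
  fold U2. fold Sg.
  eapply Rle_trans; [|exact Hfin]. unfold Rdiv at 2. unfold Rdiv at 3. apply Rmult_le_compat_r.
  left; apply Rinv_0_lt_compat; lra.
  apply Rmult_le_compat; try apply pow2_ge_0; auto.
Qed.


Lemma nat_unbounded x : exists N : nat, x < INR N.
Proof. destruct (Rle_lt_dec x 0) as [H|H].
  - exists 1%nat. simpl. lra.
  - destruct (archimed x) as [H1 _]. exists (Z.to_nat (up x)).
    rewrite INR_IZR_INZ. rewrite Z2Nat.id. lra.
    apply le_IZR. lra. Qed.

Lemma tsum_pos d L F : (forall k i j, 0 <= F k i j) ->
  (exists k i j, (1 <= k <= L)%nat /\ (i < d k)%nat /\ (j < d (k - 1))%nat /\ 0 < F k i j) ->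
  0 < tsum d L F.
Proof. intros H [k [i [j [Hk [Hi [Hj Hp]]]]]]. unfold tsum.
  destruct k as [|k]; [lia|]. replace (S k - 1)%nat with k in Hj by lia.
  apply rsum_pos. intros; repeat (apply rsum_nonneg; intros); auto.
  exists k. split; [lia|].
  apply rsum_pos. intros; repeat (apply rsum_nonneg; intros); auto.
  exists i. split; [auto|].
  apply rsum_pos. intros; auto. exists j. auto. Qed.

Lemma rsum_gt n f r : (0 < n)%nat -> (forall a, (a < n)%nat -> r < f a) -> INR n * r < rsum n f.
Proof. intros Hn H. rewrite <- rsum_const.
  assert (0 < rsum n (fun a => f a - r)).
  { apply rsum_pos. intros a Ha; specialize (H a Ha); lra. exists 0%nat. split; auto. specialize (H 0%nat Hn). lra. }
  rewrite rsum_minus in H0. lra. Qed.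


Theorem mainTheorem9
  (n : nat) (d : nat -> nat) (L : nat)
  (x : nat -> nat -> R) (y : nat -> R)
  (loss dloss : R -> R) (beta G Rad : R)
  (W : nat -> net) (g : nat -> net)
  (* data *)
  (Hn : (0 < n)%nat) (HL : (1 <= L)%nat) (HdL : d L = 1%nat)
  (Hx : forall i, (i < n)%nat ->
          sqrt (rsum (d 0%nat) (fun j => (x i j) ^ 2)) <= 1)
  (Hy : forall i, (i < n)%nat -> y i = 1 \/ y i = -1)
  (Hsep : exists u : nat -> R, forall i, (i < n)%nat ->
          0 < rsum (d 0%nat) (fun j => u j * zdat x y i j))
  (* Assumption 1 *)
  (Hder : forall t, derivable_pt_lim loss t (dloss t))
  (Hcont : forall t, continuity_pt dloss t)
  (Hneg : forall t, dloss t < 0)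
  (Hminf : forall M, exists N, forall t, t < N -> M < loss t)
  (Hpinf : forall eps, 0 < eps -> exists N, forall t, N < t -> Rabs (loss t) < eps)
  (* Assumption 4 *)
  (Hlip : forall s t, Rabs (dloss s - dloss t) <= beta * Rabs (s - t))
  (Hbd : forall t, Rabs (dloss t) <= G)
  (* gradient descent with step 1/beta(R), beta(R) = 2 L^2 R^(2L-2) (beta+G) *)
  (HR : 1 <= Rad)
  (Hgrad : forall t, is_grad loss n d L x y (W t) (g t))
  (Hstep : forall t k i j,
     W (S t) k i j =
       W t k i j - / (2 * (INR L) ^ 2 * Rad ^ (2 * L - 2) * (beta + G)) * g t k i j)
  (* Assumption 2 *)
  (Hg0 : exists k i j, (1 <= k <= L)%nat /\ (i < d k)%nat /\ (j < d (k - 1))%nat /\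
          g 0%nat k i j <> 0)
  (Hr0 : risk loss n d L x y (W 0%nat) <= loss 0) :
  exists t k, (1 <= k <= L)%nat /\ Rad < frob d (W t) k.
Proof.
  apply NNPP. intros Hno.
  assert (Hball : forall t k, (1 <= k <= L)%nat -> frob d (W t) k <= Rad).
  { intros t k Hk. apply Rnot_lt_le. intros Hlt. apply Hno. exists t, k. auto. }
  assert (HG : 0 < G) by (specialize (Hbd 0); specialize (Hneg 0); unfold Rabs in Hbd; destruct (Rcase_abs (dloss 0)); lra).
  assert (Hb : 0 <= beta).
  { specialize (Hlip 1 0). pose proof (Rabs_pos (dloss 1 - dloss 0)).
    replace (1 - 0) with 1 in Hlip by ring. rewrite Rabs_R1 in Hlip. lra. }
  assert (Hz : forall a, (a < n)%nat -> nrm (d 0%nat) (zdat x y a) <= 1).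
  { intros a Ha. unfold nrm. rewrite (rsum_ext _ _ (fun j => x a j ^ 2)). auto.
    intros j _. unfold zdat. destruct (Hy a Ha) as [E|E]; rewrite E; ring. }
  set (P := Rad ^ (L - 1)).
  assert (HP : 1 <= P) by (apply pow_R1_Rle; lra).
  assert (HP2 : Rad ^ (2 * L - 2) = P ^ 2).
  { unfold P. rewrite <- pow_mult. f_equal. lia. }
  set (eta := / (2 * (INR L) ^ 2 * Rad ^ (2 * L - 2) * (beta + G))).
  assert (HLr : 1 <= INR L) by (apply (le_INR 1); auto).
  assert (Hden : 0 < 2 * (INR L) ^ 2 * Rad ^ (2 * L - 2) * (beta + G)).
  { rewrite HP2. assert (0 < P ^ 2) by nra. assert (0 < INR L ^ 2) by nra.
    apply Rmult_lt_0_compat; [|lra]. nra. }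
  assert (Heta : 0 < eta) by (apply Rinv_0_lt_compat; auto).
  assert (Hsmall : eta * (G + beta) * (Rad ^ (L - 1)) ^ 2 * INR L <= 1 / 2).
  { fold P. unfold eta. rewrite HP2.
    replace (/ (2 * INR L ^ 2 * P ^ 2 * (beta + G)) * (G + beta) * P ^ 2 * INR L) with (/ (2 * INR L)).
    2:{ field. split; [lra|split; nra]. }
    apply Rmult_le_reg_l with (2 * INR L). lra. rewrite Rinv_r by lra. lra. }
  set (Sg := fun t => tsum d L (fun k i j => g t k i j ^ 2)).
  assert (HSg : forall t, 0 <= Sg t) by (intros; apply tsum_nonneg; intros; apply pow2_ge_0).
  set (rk := fun t => risk loss n d L x y (W t)).
  assert (Hdesc : forall t, rk (S t) <= rk t - eta / 2 * Sg t).
  { intros t. apply (descent loss dloss n d L x y (W t) (W (S t)) (g t) beta G Rad eta); auto.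
    all: intros; apply Hball; auto. }
  assert (HSg0 : 0 < Sg 0%nat).
  { apply tsum_pos. intros; apply pow2_ge_0.
    destruct Hg0 as [k [i [j [H1 [H2 [H3 H4]]]]]]. exists k, i, j. repeat split; auto; try lia.
    replace (g 0%nat k i j ^ 2) with (Rsqr (g 0%nat k i j)) by (unfold Rsqr; ring). apply Rsqr_pos_lt; auto. }
  set (r1 := rk 1%nat).
  assert (Hr1 : r1 < loss 0).
  { unfold r1. specialize (Hdesc 0%nat). fold rk in Hr0. unfold rk in Hr0 |- *.
    assert (0 < eta / 2 * Sg 0%nat) by (apply Rmult_lt_0_compat; lra). unfold rk in Hdesc. lra. }
  assert (Hmono : forall m, rk (S m) <= r1).
  { induction m. unfold r1; lra. specialize (Hdesc (S m)). specialize (HSg (S m)).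
    assert (0 <= eta / 2 * Sg (S m)) by (apply Rmult_le_pos; lra). lra. }
  assert (Hdec : forall a b, a < b -> loss b < loss a).
  { intros a b Hab. destruct (MVT_cor2 loss dloss a b Hab (fun c _ => Hder c)) as [c [E _]].
    specialize (Hneg c). nra. }
  assert (Hl0 : forall t, 0 <= loss t).
  { intros t. apply Rnot_lt_le. intros Hlt.
    destruct (Hpinf (- loss t) ltac:(lra)) as [N HN].
    set (T := Rmax N t + 1).
    assert (N < T) by (unfold T; pose proof (Rmax_l N t); lra).
    assert (t < T) by (unfold T; pose proof (Rmax_r N t); lra).
    specialize (HN T H). specialize (Hdec t T H0).
    unfold Rabs in HN. destruct (Rcase_abs (loss T)); lra. }
  assert (Hrk0 : forall t, 0 <= rk t).
  { intros t. unfold rk. rewrite risk_eq by auto. apply Rmult_le_pos.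
    left; apply Rinv_0_lt_compat, lt_0_INR; lia. apply rsum_nonneg; intros; auto. }
  set (delta := (loss 0 - r1) / (2 * G)).
  assert (Hdel : 0 < delta) by (unfold delta; apply Rdiv_lt_0_compat; lra).
  assert (Hldel : r1 < loss delta).
  { destruct (MVT_cor2 loss dloss 0 delta Hdel (fun c _ => Hder c)) as [c [E _]].
    specialize (Hbd c). unfold Rabs in Hbd. destruct (Rcase_abs (dloss c)).
    - assert (dloss c * (delta - 0) >= - G * delta) by nra.
      assert (G * delta = (loss 0 - r1) / 2) by (unfold delta; field; lra). lra.
    - specialize (Hneg c). lra. }
  assert (Hmarg : forall m, exists a, (a < n)%nat /\ delta <= fwd d (W (S m)) (zdat x y a) L 0%nat).
  { intros m. apply NNPP. intros Hc.
    assert (Hall : forall a, (a < n)%nat -> r1 < loss (fwd d (W (S m)) (zdat x y a) L 0%nat)).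
    { intros a Ha. assert (fwd d (W (S m)) (zdat x y a) L 0%nat < delta).
      { apply Rnot_le_lt. intros Hle. apply Hc. exists a. auto. }
      specialize (Hdec _ _ H). lra. }
    pose proof (rsum_gt n _ r1 Hn Hall) as Hs.
    specialize (Hmono m). unfold rk in Hmono. rewrite risk_eq in Hmono by auto.
    assert (Hn' : 0 < INR n) by (apply lt_0_INR; lia).
    apply Rmult_lt_compat_l with (r := / INR n) in Hs; [|apply Rinv_0_lt_compat; lra].
    replace (/ INR n * (INR n * r1)) with r1 in Hs by (field; lra). lra. }
  destruct (continuity_ab_maj dloss (- Rad ^ L) (Rad ^ L)) as [Mx [HMx _]].
  { pose proof (pow_le Rad L ltac:(lra)). lra. }
  { intros; auto. }
  set (M := dloss Mx).
  assert (HM : M < 0) by apply Hneg.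
  assert (HMb : forall t, Rabs t <= Rad ^ L -> dloss t <= M).
  { intros t Ht. apply HMx. unfold Rabs in Ht; destruct (Rcase_abs t); lra. }
  destruct Hsep as [u Hu].
  set (c0 := rsum (d 0%nat) (fun j => u j * zdat x y 0%nat j)).
  set (U2 := rsum (d 0%nat) (fun j => u j ^ 2)).
  assert (Hc0 : 0 < c0) by (apply Hu; auto).
  assert (HU2 : 0 < U2).
  { pose proof (dot_le (d 0%nat) u (zdat x y 0%nat)) as H. fold c0 in H.
    unfold U2. rewrite <- nrm_sq. pose proof (nrm_nonneg (d 0%nat) u). pose proof (nrm_nonneg (d 0%nat) (zdat x y 0%nat)).
    assert (0 < nrm (d 0%nat) u).
    { destruct H0 as [H0|H0]; auto. rewrite <- H0 in H. lra. }
    nra. }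
  set (kappa := (delta / Rad) ^ 2 * (M * c0 / INR n) ^ 2 / U2).
  assert (Hkap : 0 < kappa).
  { unfold kappa. apply Rdiv_lt_0_compat; auto. apply Rmult_lt_0_compat.
    apply pow_lt. apply Rdiv_lt_0_compat; lra.
    replace ((M * c0 / INR n) ^ 2) with (Rsqr (M * c0 / INR n)) by (unfold Rsqr; ring). apply Rsqr_pos_lt.
    assert (0 < INR n) by (apply lt_0_INR; lia).
    unfold Rdiv. apply Rmult_integral_contrapositive_currified. nra. apply Rinv_neq_0_compat. lra. }
  assert (Hlow : forall m, kappa <= Sg (S m)).
  { intros m. unfold kappa, Sg, c0, U2.
    apply (grad_lower loss dloss n d L x y (W (S m)) (g (S m)) Rad u delta M); auto. }
  assert (Hdrop : forall m, rk (S m) <= r1 - INR m * (eta / 2 * kappa)).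
  { induction m. simpl. unfold r1. lra.
    specialize (Hdesc (S m)). specialize (Hlow m).
    assert (eta / 2 * kappa <= eta / 2 * Sg (S m)) by (apply Rmult_le_compat_l; lra).
    rewrite S_INR. lra. }
  assert (Hek : 0 < eta / 2 * kappa) by (apply Rmult_lt_0_compat; lra).
  destruct (nat_unbounded (r1 / (eta / 2 * kappa))) as [N HN].
  specialize (Hdrop N). specialize (Hrk0 (S N)).
  assert (r1 < INR N * (eta / 2 * kappa)).
  { apply Rmult_lt_compat_r with (r := eta / 2 * kappa) in HN; auto.
    replace (r1 / (eta / 2 * kappa) * (eta / 2 * kappa)) with r1 in HN by (field; lra). lra. }
  lra.
Qed.
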